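(* For all $n\ge 1$, $$\sum_{\pi\in\mathcal D_n}t^{\mathsf{cyc}_D^+(\pi)}=t\prod_{i=2}^n(t+2i-1)\qquad\text{and}\qquad\sum_{\pi\in\mathcal D_n}t^{\tilde\ell'_D(\pi)}=\prod_{i=2}^n\bigl(1+(2i-1)t\bigr).$$
   Context: Signed permutations of $[n]$ are words $\pi=\pi_1\cdots\pi_n$ where $|\pi_1|\cdots|\pi_n|$ is a permutation $\sigma$ of $[n]$ and each letter may carry a bar ($\bar i=-i$); this is $\mathsf{G}_{2,n}=C_2\wr\mathfrak S_n$ with color $1$ meaning barred. $\mathcal D_n$ is the subgroup of signed permutations having an even number of barred letters. For $1\le|i|<j\le n$, $t^D_{ij}$ is the element such that $\pi\cdot t^D_{ij}$ (for $i>0$) swaps the letters in positions $i$ and $j$, and (for $i<0$) puts in position $j$ the letter from position $|i|$ with its sign changed and in position $|i|$ the letter from position $j$ with its sign changed; for $1<i\le n$, $t^D_{\bar i i}$ is the element such that $\pi\cdot t^D_{\bar ii}$ changes the signs of the letters in positions $1$ and $i$. $\tilde\ell'_D(\pi)$ is the minimal number of factors needed to write $\pi$ as a product of elements of $\mathcal T^D_n=\{t^D_{ij}:1\le|i|<j\le n\}\cup\{t^D_{\bar ii}:1<i\le n\}$. $\mathsf{Cyc}^0(\pi)$ is the set of minima of those cycles of $\sigma$ containing an even number of positions $k$ with $\pi_k$ barred; $\mathsf{cyc}^+_D(\pi)=|\mathsf{Cyc}^0(\pi)\cup\{1\}|$. *)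

(* Defs.v *)
From mathcomp Require Import all_boot all_order all_algebra all_fingroup.
Set Implicit Arguments. Unset Strict Implicit. Unset Printing Implicit Defensive.

(* Signed permutations of [n], positions/values 0-indexed ('I_n stands for [n]).
   A pair (s, e) represents the word pi with pi_k = (-1)^(e k) * (s k + 1),
   i.e. s = sigma (the underlying permutation |pi_1|...|pi_n|) and e k = true
   iff the letter in position k is barred (color 1). *)
Definition SP (n : nat) := ({perm 'I_n} * {ffun 'I_n -> bool})%type.

Definition sp_one n : SP n := (1%g, [ffun=> false]).

(* Group product = composition of signed permutations viewed as maps on
   {+-1..+-n}: (p q)(k) = p (q k).  Hence p * t acts on the positions of p. *)
Definition sp_mul n (p q : SP n) : SP n :=
  ((q.1 * p.1)%g, [ffun k => q.2 k (+) p.2 (q.1 k)]).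

Definition nbar n (p : SP n) : nat := #|[set k | p.2 k]|.
Definition inD n (p : SP n) : bool := ~~ odd (nbar p).

Definition tsw n (a b : 'I_n) : SP n := (tperm a b, [ffun=> false]).
Definition tns n (a b : 'I_n) : SP n :=
  (tperm a b, [ffun k => (k == a) || (k == b)]).
(* t_{bar i i}, 1 < i : changes the signs of positions 1 and i *)
Definition tbb n (a b : 'I_n) : SP n := (1%g, [ffun k => (k == a) || (k == b)]).

Definition isgen n (g : SP n) : bool :=
  [exists a : 'I_n, exists b : 'I_n, (a < b) &&
     [|| g == tsw a b, g == tns a b | (val a == 0) && (g == tbb a b)]].

Definition prodw n (s : seq (SP n)) : SP n := foldl (@sp_mul n) (sp_one n) s.

(* minimal number of factors from T^D_n needed to write p (the search bound
   #|SP n| exceeds any such minimal length, since a shortest word has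
   pairwise distinct prefix products) *)
Definition ellD n (p : SP n) : nat :=
  find (fun k => [exists w : k.-tuple (SP n), all (@isgen n) w && (prodw w == p)])
       (iota 0 #|{: SP n}|).

Definition Cyc0 n (p : SP n) : {set 'I_n} :=
  [set k : 'I_n | [forall m in porbit p.1 k, k <= m] &&
                  ~~ odd #|[set m in porbit p.1 k | p.2 m]|].

(* cyc^+_D = |Cyc^0 u {1}|  (position 1 is index 0 here) *)
Definition cycDp n (p : SP n) : nat :=
  #|Cyc0 p :|: [set k : 'I_n | val k == 0]|.

(* Main.v *)
Require Import Defs.
From mathcomp Require Import all_boot all_order all_algebra all_fingroup.
From mathcomp Require Import zify ring.
Set Implicit Arguments. Unset Strict Implicit. Unset Printing Implicit Defensive.

Section Orb.
Variable T : finType.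
Implicit Types (s : {perm T}).
Local Open Scope group_scope.

Lemma porbit_closed s x y : y \in porbit s x -> s y \in porbit s x.
Proof.
by case/porbitP=> i ->; rewrite -permM -expgSr mem_porbit.
Qed.

Lemma porbit_sub s (P : {set T}) x :
  x \in P -> (forall y, y \in P -> s y \in P) -> porbit s x \subset P.
Proof.
move=> xP sP; apply/subsetP => y /porbitP [i ->].
elim: i => [|i IH]; first by rewrite expg0 perm1.
by rewrite expgSr permM; apply: sP.
Qed.

Lemma porbit_agree s s' z :
  (forall y, y \in porbit s z -> s' y = s y) -> porbit s' z = porbit s z.
Proof.
move=> H.
have E i : (s' ^+ i) z = (s ^+ i) z.
  elim: i => [|i IH]; first by rewrite !expg0.
  by rewrite !expgSr !permM IH H // mem_porbit.
apply/setP => y; apply/porbitP/porbitP => -[i ->]; exists i; by rewrite E.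
Qed.

Lemma porbit_fix s x : s x = x -> porbit s x = [set x].
Proof.
move=> sx; apply/eqP; rewrite eqEsubset; apply/andP; split.
  by apply: porbit_sub; rewrite ?set11 // => y /set1P ->; rewrite sx set11.
by rewrite sub1set porbit_id.
Qed.

Lemma porbit_merge s a b : a \notin porbit s b ->
  porbit (tperm a b * s) a = porbit s a :|: porbit s b.
Proof.
move=> nab; set s' := tperm a b * s.
have hab : a != b by apply: contraNneq nab => ->; apply: porbit_id.
have c1 := porbits_mul_tperm s a b; rewrite /= nab hab in c1.
have c2 := porbits_mul_tperm s' a b; rewrite /= hab /s' tpermKg in c2.
have ab' : a \in porbit s' b.
  by apply/negPn/negP => H; rewrite H /= in c2; move: c1 c2; rewrite /=; lia.
have sE y : s y = s' (tperm a b y) by rewrite /s' permM tpermK.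
have bP : b \in porbit s' a by rewrite porbit_sym.
have tP y : y \in porbit s' a -> tperm a b y \in porbit s' a.
  by move=> yP; case: tpermP => _ //; rewrite porbit_id.
apply/eqP; rewrite eqEsubset; apply/andP; split.
  apply: porbit_sub; first by rewrite inE porbit_id.
  move=> y; rewrite /s' permM => Hy.
  have Hy' : tperm a b y \in porbit s a :|: porbit s b.
    by case: tpermP => [_|_|_ _] //; rewrite inE porbit_id ?orbT.
  by move: Hy'; rewrite !inE => /orP [] /porbit_closed ->; rewrite ?orbT.
have sub x : x \in porbit s' a -> porbit s x \subset porbit s' a.
  move=> xP; apply: porbit_sub => // y yP; rewrite sE.
  by apply: porbit_closed; apply: tP.
by rewrite subUset !sub // porbit_id.
Qed.

End Orb.
Section SPn.
Variable n : nat.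
Implicit Types (p : SP n) (O A B : {set 'I_n}).

Definition Zs : {set 'I_n} := [set k : 'I_n | val k != 0%N].
Definition par (e : 'I_n -> bool) O := odd #|[set m in O | e m]|.
Definition Qo p O := (O \subset Zs) && ~~ par p.2 O.
Definition Ecount p := #|[set O in porbits p.1 | Qo p O]|.

Lemma card_sum (T : finType) (S : {set T}) (P : pred T) :
  #|[set x in S | P x]| = \sum_(x in S) (P x : nat).
Proof.
rewrite -sum1_card big_mkcond [RHS]big_mkcond /=; apply: eq_bigr => x _.
by rewrite inE; case: (x \in S); case: (P x).
Qed.

Lemma bridge (T : finType) (S : {set T}) (e : T -> bool) :
  odd #|[set m in S | e m]| = \big[addb/false]_(m in S) e m.
Proof.
rewrite card_sum (big_morph odd oddD (erefl _)); apply: eq_bigr => m _.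
by rewrite oddb.
Qed.

Lemma par_mul (t : {perm 'I_n}) (f e : 'I_n -> bool) O :
  (forall y, (t y \in O) = (y \in O)) ->
  par [ffun k => f k (+) e (t k)] O = par f O (+) par e O.
Proof.
move=> tO; rewrite /par !bridge.
rewrite (eq_bigr (fun k => f k (+) e (t k))) => [|k _]; last by rewrite ffunE.
rewrite big_split /=; congr (_ (+) _).
rewrite [RHS](reindex_inj (@perm_inj _ t)) /=.
by apply: eq_bigl => y; rewrite tO.
Qed.

Lemma par_union (e : 'I_n -> bool) A B : [disjoint A & B] ->
  par e (A :|: B) = par e A (+) par e B.
Proof.
move=> dAB; rewrite /par !bridge -bigU //.
by apply: eq_bigl => y; rewrite !inE.
Qed.

Lemma porbit_disj (s : {perm 'I_n}) x y :
  porbit s x != porbit s y -> [disjoint porbit s x & porbit s y].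
Proof.
move=> ne; rewrite disjoints_subset; apply/subsetP => z zx; rewrite inE.
apply/negP => zy; move/eqP: ne; apply.
have -> : porbit s x = porbit s z by apply/eqP; rewrite eq_porbit_mem porbit_sym.
by apply/eqP; rewrite eq_porbit_mem.
Qed.

Lemma sum_pair (A B : {set 'I_n}) (P : pred {set 'I_n}) :
  #|[set O in [set A; B] | P O]| = if A == B then (P A : nat) else P A + P B.
Proof.
rewrite card_sum; case: eqP => [<-|/eqP nAB].
  by rewrite setUid big_set1.
by rewrite big_setU1 ?big_set1 // inE.
Qed.

Definition Eout p a b :=
  #|[set O in porbits p.1 | Qo p O && (a \notin O) && (b \notin O)]|.

Lemma E_split p a b :
  Ecount p = Eout p a b + #|[set O in [set porbit p.1 a; porbit p.1 b] | Qo p O]|.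
Proof.
rewrite /Ecount /Eout -[LHS](cardsID [set O : {set 'I_n} | (a \notin O) && (b \notin O)]).
congr (_ + _); apply: eq_card => O; rewrite !inE.
  by rewrite !andbA.
apply/idP/idP.
  case/and3P => + /imsetP [x _ eO] QO; rewrite QO andbT eO. rewrite negb_and !negbK => /orP [] H.
    have -> : porbit p.1 x = porbit p.1 a.
      by apply/eqP; rewrite eq_porbit_mem porbit_sym.
    by rewrite eqxx.
  have -> : porbit p.1 x = porbit p.1 b.
    by apply/eqP; rewrite eq_porbit_mem porbit_sym.
  by rewrite eqxx orbT.
by case/andP => /orP [] /eqP -> ->; rewrite imset_f // porbit_id ?andbF.
Qed.

Lemma Eout_sub p p' a b :
  (forall y, y != a -> y != b -> p'.1 y = p.1 y) ->
  (forall y, y != a -> y != b -> p'.2 y = p.2 y) ->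
  [set O in porbits p.1 | Qo p O && (a \notin O) && (b \notin O)] \subset
  [set O in porbits p'.1 | Qo p' O && (a \notin O) && (b \notin O)].
Proof.
move=> H1 H2; apply/subsetP => O; rewrite !inE => /andP [/imsetP [x _ ->]].
case/andP => /andP [QO na] nb.
have ag : forall y, y \in porbit p.1 x -> y != a /\ y != b.
  by move=> y yO; split; apply/eqP => e; [move: na|move: nb]; rewrite -e yO.
have EE : porbit p'.1 x = porbit p.1 x.
  by apply: porbit_agree => y /ag [ya yb]; apply: H1.
rewrite na nb -{1}EE imset_f //= !andbT.
move: QO; rewrite /Qo /par.
have -> // : [set m in porbit p.1 x | p'.2 m] = [set m in porbit p.1 x | p.2 m].
apply/setP => y; rewrite !inE; case yO: (y \in porbit _ _) => //=.
by case: (ag y yO) => ya yb; rewrite H2.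
Qed.

Lemma Eout_eq p p' a b :
  (forall y, y != a -> y != b -> p'.1 y = p.1 y) ->
  (forall y, y != a -> y != b -> p'.2 y = p.2 y) ->
  Eout p a b = Eout p' a b.
Proof.
move=> H1 H2; rewrite /Eout; apply/eqP; rewrite eqn_leq !subset_leq_card //.
  by apply: Eout_sub => y ya yb; rewrite (H1, H2).
exact: (Eout_sub H1 H2).
Qed.

End SPn.
Section Gens.
Variable n : nat.
Implicit Types (p : SP n) (O A B : {set 'I_n}).
Local Notation Zs := (Zs n).

Definition gt (a b : 'I_n) (c : bool) : SP n :=
  (tperm a b, [ffun k => c && ((k == a) || (k == b))]).

Lemma tsw_gt a b : tsw a b = gt a b false.
Proof. by congr pair; apply/ffunP => k; rewrite !ffunE. Qed.
Lemma tns_gt a b : tns a b = gt a b true.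
Proof. by congr pair; apply/ffunP => k; rewrite !ffunE. Qed.

Lemma mul_gt1 p a b c y : y != a -> y != b -> (sp_mul p (gt a b c)).1 y = p.1 y.
Proof. by move=> ya yb; rewrite /= permM tpermD // eq_sym. Qed.

Lemma mul_gt2 p a b c y : y != a -> y != b -> (sp_mul p (gt a b c)).2 y = p.2 y.
Proof.
by move=> ya yb; rewrite /= !ffunE (negbTE ya) (negbTE yb) andbF tpermD // eq_sym.
Qed.

Lemma par_gt a b c O : a != b -> a \in O -> b \in O -> par (gt a b c).2 O = false.
Proof.
move=> hab aO bO; rewrite /par.
have -> : [set m in O | (gt a b c).2 m] = if c then [set a; b] else set0.
  case: c; apply/setP => m; rewrite !inE ffunE /= ?andbF //.
  by case: eqP => [->|_]; case: eqP => [->|_]; rewrite ?aO ?bO ?andbF ?orbT.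
by case: c; rewrite ?cards0 // cards2 hab.
Qed.

Lemma par_merge p a b c : a \notin porbit p.1 b ->
  par (sp_mul p (gt a b c)).2 (porbit p.1 a :|: porbit p.1 b)
  = par p.2 (porbit p.1 a) (+) par p.2 (porbit p.1 b).
Proof.
move=> nab.
have hab : a != b by apply/eqP => e; move: nab; rewrite e porbit_id.
rewrite /sp_mul /= par_mul.
  rewrite par_gt // ?inE ?porbit_id ?orbT // par_union //.
  apply: porbit_disj; apply/eqP => e; move: nab; rewrite -e porbit_id //.
move=> y; rewrite !inE; case: tpermP => [->|->|//]; by rewrite !porbit_id ?orbT.
Qed.

Lemma Qo1 p m : val m != 0%N -> ~~ p.2 m -> Qo p [set m].
Proof.
move=> m0 em; rewrite /Qo sub1set inE m0 /par.
have -> : [set x in [set m] | p.2 x] = set0.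
  by apply/setP => x; rewrite !inE; case: eqP => // ->; rewrite (negbTE em).
by rewrite cards0.
Qed.

Lemma E_gt p a b c : a != b -> Ecount p <= Ecount (sp_mul p (gt a b c)) + 1.
Proof.
move=> hab; set p' := sp_mul _ _.
rewrite (E_split p a b) (E_split p' a b) (@Eout_eq _ p p' a b); last 2 first.
- by move=> y ya yb; rewrite mul_gt1.
- by move=> y ya yb; rewrite mul_gt2.
rewrite -addnA leq_add2l !sum_pair.
have [ab|nab] := boolP (a \in porbit p.1 b).
  rewrite (_ : porbit p.1 a == porbit p.1 b) ?eq_porbit_mem //.
  by apply: leq_trans (leq_b1 _) _; rewrite leq_addl.
have mA : porbit p'.1 a = porbit p.1 a :|: porbit p.1 b by apply: porbit_merge.
have mB : porbit p'.1 b = porbit p'.1 a.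
  by apply/eqP; rewrite eq_porbit_mem mA inE porbit_id orbT.
have neAB : porbit p.1 a != porbit p.1 b.
  by apply/eqP => e; move: nab; rewrite -e porbit_id.
rewrite mB eqxx (negbTE neAB).
case QA: (Qo p _); case QB: (Qo p _); rewrite /= ?addn0 ?add0n ?addn1 //.
rewrite mA /Qo subUset par_merge //.
by move: QA QB; rewrite /Qo => /andP [-> /negbTE ->] /andP [-> /negbTE ->].
Qed.

Lemma E_tbb p a b : val a == 0%N -> a != b ->
  Ecount p <= Ecount (sp_mul p (tbb a b)) + 1.
Proof.
move=> a0 hab; set p' := sp_mul _ _.
rewrite (E_split p a b) (E_split p' a b) (@Eout_eq _ p p' a b); last 2 first.
- by move=> y ya yb; rewrite /= permM !perm1.
- by move=> y ya yb; rewrite /= !ffunE (negbTE ya) (negbTE yb) perm1.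
rewrite -addnA leq_add2l !sum_pair.
have QA : Qo p (porbit p.1 a) = false.
  apply/negbTE; rewrite /Qo negb_and; apply/orP; left.
  by apply/subsetPn; exists a; rewrite ?porbit_id // inE negbK.
rewrite QA; case: eqP => _ //=.
exact: leq_trans (leq_b1 _) (leq_addl _ _).
Qed.

Lemma E_fact_gt p a m c : a != m -> val m != 0%N -> p.1 m = m -> ~~ p.2 m ->
  Ecount (sp_mul p (gt a m c)) + 1 = Ecount p.
Proof.
move=> ham m0 pm em; set p' := sp_mul _ _.
rewrite (E_split p a m) (E_split p' a m) (@Eout_eq _ p p' a m); last 2 first.
- by move=> y ya yb; rewrite mul_gt1.
- by move=> y ya yb; rewrite mul_gt2.
rewrite -addnA; congr (_ + _); rewrite !sum_pair.
have fm : porbit p.1 m = [set m] by apply: porbit_fix.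
have nab : a \notin porbit p.1 m by rewrite fm inE.
have mA : porbit p'.1 a = porbit p.1 a :|: porbit p.1 m by apply: porbit_merge.
have mB : porbit p'.1 m = porbit p'.1 a.
  by apply/eqP; rewrite eq_porbit_mem mA inE porbit_id orbT.
have neAB : porbit p.1 a != porbit p.1 m.
  by apply/eqP => e; move: nab; rewrite -e porbit_id.
rewrite mB eqxx (negbTE neAB) fm Qo1 //.
rewrite mA /Qo subUset par_merge // fm.
have -> : par p.2 [set m] = false by move: (Qo1 m0 em); rewrite /Qo => /andP [_ /negbTE].
have -> : [set m] \subset Zs by rewrite sub1set inE.
by rewrite andbT addbF addn1.
Qed.

Lemma E_fact_tbb p a m : val a == 0%N -> a != m -> val m != 0%N -> p.1 m = m -> ~~ p.2 m ->
  Ecount (sp_mul p (tbb a m)) + 1 = Ecount p.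
Proof.
move=> a0 ham m0 pm em; set p' := sp_mul _ _.
rewrite (E_split p a m) (E_split p' a m) (@Eout_eq _ p p' a m); last 2 first.
- by move=> y ya yb; rewrite /= permM !perm1.
- by move=> y ya yb; rewrite /= !ffunE (negbTE ya) (negbTE yb) perm1.
rewrite -addnA; congr (_ + _); rewrite !sum_pair.
have e1 : p'.1 = p.1 by rewrite /= mul1g.
have fm : porbit p.1 m = [set m] by apply: porbit_fix.
have neAB : porbit p.1 a != porbit p.1 m.
  by apply/eqP => e; move: ham; rewrite fm in e; move: (porbit_id p.1 a); rewrite e inE => ->.
have QA q : q.1 = p.1 -> Qo q (porbit p.1 a) = false.
  move=> _; apply/negbTE; rewrite /Qo negb_and; apply/orP; left.
  by apply/subsetPn; exists a; rewrite ?porbit_id // inE negbK.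
rewrite e1 (negbTE neAB) !QA // fm (Qo1 m0 em).
rewrite /Qo /par.
have -> : [set x in [set m] | p'.2 x] = [set m].
  apply/setP => x; rewrite !inE /= ffunE; case: eqP => // ->.
  by rewrite ffunE eqxx orbT perm1 (negbTE em).
by rewrite cards1 andbF.
Qed.

End Gens.
Lemma cycDpE n (p : SP n) :
  cycDp p = #|[set k : 'I_n | val k == 0%N]| + Ecount p.
Proof.
rewrite /cycDp; set C := Cyc0 p; set Z0 := [set k : 'I_n | val k == 0%N].
rewrite -(cardsID (Zs n) (C :|: Z0)).
have -> : (C :|: Z0) :&: Zs n = C :&: Zs n.
  by apply/setP => k; rewrite !inE; case: eqP; rewrite ?orbT ?andbF ?orbF.
have -> : (C :|: Z0) :\: Zs n = Z0.
  by apply/setP => k; rewrite !inE; case: eqP; rewrite ?orbT ?andbF ?orbF.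
rewrite addnC; congr (_ + _).
have inj : {in C :&: Zs n &, injective (porbit p.1)}.
  move=> k k' /setIP [+ _] /setIP [+ _] e.
  rewrite !inE => /andP [/forallP mk _] /andP [/forallP mk' _].
  have h1 := mk k'; have h2 := mk' k.
  rewrite e porbit_id /= in h1; rewrite -e porbit_id /= in h2.
  by apply/val_inj/eqP; rewrite eqn_leq h1 h2.
rewrite /Ecount -(card_in_imset inj); apply: eq_card => O.
apply/imsetP/idP.
  case=> k /setIP [kC kZ] ->; rewrite inE imset_f //=.
  move: kC; rewrite inE => /andP [/forallP mk ev]; rewrite /Qo /par ev andbT.
  apply/subsetP => m mk'; move: kZ (mk m); rewrite !inE mk' /= => kZ km.
  by move: kZ km; rewrite /=; lia.
rewrite inE => /andP [/imsetP [x _ ->] QO].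
have := @arg_minnP _ x (fun y => y \in porbit p.1 x) (fun y => val y) (porbit_id _ x).
case=> k kO kmin; exists k; last by apply/eqP; rewrite eq_porbit_mem porbit_sym.
have ek : porbit p.1 k = porbit p.1 x by apply/eqP; rewrite eq_porbit_mem.
move: QO; rewrite /Qo /par => /andP [/subsetP sZ ev].
rewrite !inE ek ev andbT; apply/andP; split.
  by apply/forallP => m; apply/implyP; exact: kmin.
by have := sZ k kO; rewrite inE.
Qed.
Section Grp.
Variable n : nat.
Implicit Types (p g h : SP n).

Lemma sp_mulA p g h : sp_mul (sp_mul p g) h = sp_mul p (sp_mul g h).
Proof.
rewrite /sp_mul /=; congr pair; first by rewrite mulgA.
by apply/ffunP => k; rewrite !ffunE permM addbA.
Qed.

Lemma sp_mul1 p : sp_mul p (sp_one n) = p.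
Proof.
case: p => s e; rewrite /sp_mul /=; congr pair; first by rewrite mul1g.
by apply/ffunP => k; rewrite !ffunE perm1.
Qed.

Lemma nbar_par p : odd (nbar p) = par p.2 [set: 'I_n].
Proof. by rewrite /nbar /par; congr odd; apply: eq_card => k; rewrite !inE. Qed.

Lemma inD_mul p g : inD (sp_mul p g) = (inD p == inD g).
Proof.
rewrite /inD !nbar_par /sp_mul /= par_mul; last by move=> y; rewrite !inE.
by case: (par g.2 _); case: (par p.2 _).
Qed.

Lemma gt_inv (a b : 'I_n) c : sp_mul (gt a b c) (gt a b c) = sp_one n.
Proof.
rewrite /sp_mul /=; congr pair; first by rewrite tperm2.
apply/ffunP => k; rewrite !ffunE; case: tpermP => [->|->|_ _]; rewrite ?addbb //.
all: by rewrite !eqxx ?orbT /= addbb.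
Qed.

Lemma tbb_inv (a b : 'I_n) : sp_mul (tbb a b) (tbb a b) = sp_one n.
Proof.
rewrite /sp_mul /=; congr pair; first by rewrite mul1g.
by apply/ffunP => k; rewrite !ffunE perm1 addbb.
Qed.

Lemma inD_gt (a b : 'I_n) c : a != b -> inD (gt a b c).
Proof.
move=> hab; by rewrite /inD nbar_par par_gt ?inE.
Qed.

Lemma inD_tbb (a b : 'I_n) : a != b -> inD (tbb a b).
Proof.
move=> hab; rewrite /inD nbar_par /par.
have -> : [set m in [set: 'I_n] | (tbb a b).2 m] = [set a; b].
  by apply/setP => m; rewrite !inE ffunE.
by rewrite cards2 hab.
Qed.

Lemma cyc_gen p g : isgen g -> cycDp p <= cycDp (sp_mul p g) + 1.
Proof.
case/existsP => a /existsP [b /andP [ab H]].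
have hab : a != b by rewrite neq_ltn ab.
rewrite !cycDpE -addnA leq_add2l.
case/or3P: H => [/eqP->|/eqP->|/andP [a0 /eqP->]].
- rewrite tsw_gt; exact: E_gt.
- rewrite tns_gt; exact: E_gt.
- exact: E_tbb.
Qed.

Lemma prodw_rcons (w : seq (SP n)) g : prodw (rcons w g) = sp_mul (prodw w) g.
Proof. by rewrite /prodw foldl_rcons. Qed.

Lemma cyc_one : cycDp (sp_one n) = n.
Proof.
rewrite /cycDp -[RHS](card_ord n); apply: eq_card => k.
suff H : k \in Cyc0 (sp_one n) by rewrite in_setU H.
have pk : porbit (sp_one n).1 k = [set k] by apply: porbit_fix; rewrite perm1.
rewrite inE pk; apply/andP; split.
  by apply/forallP => m; apply/implyP; rewrite inE => /eqP ->.
have -> : [set m in [set k] | (sp_one n).2 m] = set0.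
  by apply/setP => m; rewrite !inE ffunE andbF.
by rewrite cards0.
Qed.

Lemma cyc_word (w : seq (SP n)) : all (@isgen n) w -> n <= cycDp (prodw w) + size w.
Proof.
elim/last_ind: w => [|w g IH]; first by rewrite /prodw /= cyc_one addn0.
rewrite all_rcons => /andP [gg aw]; rewrite prodw_rcons size_rcons addnS -addSn.
apply: leq_trans (IH aw) _; rewrite leq_add2r -addn1; exact: cyc_gen.
Qed.

End Grp.
Section Fact.
Variable n : nat.
Local Notation N := n.+1.
Implicit Types (p q : SP N).

Definition gen (m : 'I_N) (c : nat) : SP N :=
  if c == 0%N then sp_one N else if c == 1%N then tbb ord0 m
  else gt (inord ((c - 2)./2)) m (odd c).

Definition dec (m : 'I_N) p : nat :=
  let a := (p.1^-1)%g m in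
  if a == m then nat_of_bool (p.2 m) else (2 + 2 * a + p.2 a)%N.

Definition Pm (k : nat) p :=
  inD p && [forall j : 'I_N, (k <= j) ==> (p.1 j == j) && ~~ p.2 j].

Lemma inord_ok (m : 'I_N) c : 2 <= c -> c < 2 * m + 2 ->
  nat_of_ord (inord ((c - 2)./2) : 'I_N) = (c - 2)./2 /\ (c - 2)./2 < m.
Proof.
move=> h1 h2; have lt : (c - 2)./2 < m by lia.
by rewrite inordK //; apply: leq_trans lt (ltnW (ltn_ord m)).
Qed.

Lemma gen_ge2 (m : 'I_N) (a : 'I_N) (b : bool) :
  gen m (2 + 2 * a + b) = gt a m b.
Proof.
rewrite /gen; have -> : (2 + 2 * a + b == 0)%N = false by lia.
have -> : (2 + 2 * a + b == 1)%N = false by lia.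
have -> : ((2 + 2 * a + b - 2)./2 = a)%N by case: b; lia.
by rewrite inord_val; congr gt; case: b => /=; lia.
Qed.

Lemma gen_inv m c : sp_mul (gen m c) (gen m c) = sp_one N.
Proof.
rewrite /gen; case: eqP => _; first exact: sp_mul1.
case: eqP => _; [exact: tbb_inv | exact: gt_inv].
Qed.

Lemma mul_gen_K p m c : sp_mul (sp_mul p (gen m c)) (gen m c) = p.
Proof. by rewrite sp_mulA gen_inv sp_mul1. Qed.

Lemma inD_one : inD (sp_one N).
Proof.
rewrite /inD /nbar; have -> : [set k | (sp_one N).2 k] = set0.
  by apply/setP => k; rewrite !inE ffunE.
by rewrite cards0.
Qed.

Lemma inD_gen (m : 'I_N) c : 0 < m -> c < 2 * m + 2 -> inD (gen m c).
Proof.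
move=> m0 hc; rewrite /gen; case: eqP => c0; first exact: inD_one.
case: eqP => c1.
  apply: inD_tbb; apply/eqP => e; move: m0; by rewrite -e.
have [/= v lt] := @inord_ok m c ltac:(lia) hc.
apply: inD_gt; apply/eqP => e; move: lt; rewrite -v e; lia.
Qed.

Lemma gen_isgen (m : 'I_N) c : 0 < m -> c < 2 * m + 2 -> c != 0%N -> isgen (gen m c).
Proof.
move=> m0 hc c0; rewrite /gen (negbTE c0); case: eqP => c1.
  by apply/existsP; exists ord0; apply/existsP; exists m; rewrite m0 /= eqxx !orbT.
have [/= v lt] := @inord_ok m c ltac:(lia) hc.
apply/existsP; exists (inord ((c - 2)./2)); apply/existsP; exists m.
rewrite v lt /=; case: (odd c); rewrite -?tns_gt -?tsw_gt eqxx ?orbT //.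
Qed.

Lemma gen_out (m : 'I_N) c (j : 'I_N) : c < 2 * m + 2 -> m < j ->
  (gen m c).1 j = j /\ (gen m c).2 j = false.
Proof.
move=> hc mj; rewrite /gen; case: eqP => c0; first by rewrite /= perm1 ffunE.
have jm : j != m by apply/eqP => e; move: mj; rewrite e ltnn.
case: eqP => c1.
  rewrite /= perm1 ffunE (negbTE jm) orbF; split => //.
  by apply/eqP => e; move: mj; rewrite e.
have [/= v lt] := @inord_ok m c ltac:(lia) hc.
have ja : j != inord ((c - 2)./2).
  by apply/eqP => e; move: mj lt; rewrite e v; lia.
rewrite /= ffunE (negbTE ja) (negbTE jm) andbF tpermD //; by rewrite eq_sym.
Qed.

Lemma Pm_fix k p (j : 'I_N) : Pm k p -> k <= j -> p.1 j = j /\ p.2 j = false.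
Proof.
case/andP => _ /forallP /(_ j) /implyP H kj.
by case/andP: (H kj) => /eqP -> /negbTE ->.
Qed.

Lemma Pm_mul q (m : 'I_N) c : 0 < m -> c < 2 * m + 2 -> Pm m q ->
  Pm m.+1 (sp_mul q (gen m c)).
Proof.
move=> m0 hc Pq; apply/andP; split.
  by rewrite inD_mul (inD_gen m0 hc); case/andP: Pq => -> _.
apply/forallP => j; apply/implyP => mj.
have [g1 g2] := gen_out hc mj.
have [q1 q2] := Pm_fix Pq (ltnW mj).
by rewrite /= permM g1 q1 ffunE g2 g1 q2 eqxx.
Qed.

Lemma dec_mul q (m : 'I_N) c : 0 < m -> c < 2 * m + 2 -> Pm m q ->
  dec m (sp_mul q (gen m c)) = c.
Proof.
move=> m0 hc Pq; have [q1 q2] := Pm_fix Pq (leqnn m).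
rewrite /dec; set q' := sp_mul _ _.
have inv x : q'.1 x = m -> (q'.1^-1)%g m = x by move=> <-; rewrite permK.
case: (ltngtP c 1) => c1.
- have c0 : c = 0%N by lia.
  subst c; rewrite (inv m); last by rewrite /= /gen /= permM perm1.
  by rewrite eqxx /= /gen /= !ffunE perm1 q2.
- have [/= v lt] := @inord_ok m c ltac:(lia) hc.
  set a := inord _ in v.
  have am : a != m by apply/eqP => e; move: lt; rewrite -v e ltnn.
  have eg : gen m c = gt a m (odd c).
    rewrite /gen; have -> : (c == 0%N) = false by lia.
    by have -> : (c == 1%N) = false by lia.
  rewrite (inv a); last by rewrite /q' eg /= permM tpermL.
  rewrite (negbTE am) /q' eg /= !ffunE.
  have -> : (a == a) = true by apply/eqP.
  rewrite tpermL q2 /= addbF v; lia.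
- subst c; rewrite (inv m); last by rewrite /= /gen /= permM perm1.
  by rewrite eqxx /= /gen /= !ffunE perm1 q2 eqxx orbT.
Qed.

Lemma dec_ok p (m : 'I_N) : 0 < m -> Pm m.+1 p ->
  dec m p < 2 * m + 2 /\ Pm m (sp_mul p (gen m (dec m p))).
Proof.
move=> m0 Pp; rewrite /dec; set a := (p.1^-1)%g m.
have pa : p.1 a = m by rewrite /a permKV.
have ID : inD p by case/andP: Pp.
have high (j : 'I_N) : m < j -> p.1 j = j /\ p.2 j = false by move=> mj; apply: Pm_fix Pp mj.
case: eqP => [am|/eqP am].
  have pm : p.1 m = m by rewrite -{1}am.
  split; first by case: (p.2 m) => /=; lia.
  apply/andP; split.
    rewrite inD_mul ID; case: (p.2 m) => /=; first by rewrite inD_tbb //; apply/eqP => e; move: m0; rewrite -e.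
    by rewrite /gen /= inD_one.
  apply/forallP => j; apply/implyP; rewrite leq_eqVlt => /orP [/eqP/val_inj <-|mj].
    case em: (p.2 m); rewrite /gen /=.
      by rewrite permM perm1 pm !ffunE perm1 em eqxx orbT.
    by rewrite permM perm1 pm !ffunE perm1 em eqxx.
  have [g1 g2] := @gen_out m (p.2 m) j ltac:(case: (p.2 m); lia) mj.
  have [h1 h2] := high j mj.
  by rewrite /= permM g1 h1 ffunE g2 g1 h2 eqxx.
have alt : a < m.
  rewrite ltn_neqAle; apply/andP; split; first by move: am; apply: contra => /eqP e; apply/eqP/val_inj.
  rewrite leqNgt; apply/negP => ma; have [h1 _] := high a ma.
  by move: am; rewrite -{1}pa h1 eqxx.
split; first by case: (p.2 a); lia.
rewrite gen_ge2; apply/andP; split.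
  by rewrite inD_mul ID inD_gt.
apply/forallP => j; apply/implyP; rewrite leq_eqVlt => /orP [/eqP/val_inj <-|mj].
  by rewrite /= permM tpermR pa !ffunE eqxx orbT andbT tpermR addbb.
have jm : j != m by apply/eqP => e; move: mj; rewrite e ltnn.
have ja : j != a by apply/eqP => e; move: mj alt; rewrite e; lia.
have [h1 h2] := high j mj.
by rewrite mul_gt1 // mul_gt2 // h1 h2 eqxx.
Qed.

Lemma cyc_fact q (m : 'I_N) c : 0 < m -> c < 2 * m + 2 -> Pm m q ->
  cycDp (sp_mul q (gen m c)) + (c != 0%N) = cycDp q.
Proof.
move=> m0 hc Pq; have [q1 q2] := Pm_fix Pq (leqnn m).
have m0' : val m != 0%N by rewrite -lt0n.
rewrite !cycDpE -addnA; congr (_ + _).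
rewrite /gen; case: eqP => c0; first by rewrite sp_mul1 addn0.
case: eqP => c1.
  apply: E_fact_tbb => //; first by apply/eqP => e; move: m0'; rewrite -e.
  by rewrite q2.
have [/= v lt] := @inord_ok m c ltac:(lia) hc.
apply: E_fact_gt => //; last by rewrite q2.
by apply/eqP => e; move: lt; rewrite -v e ltnn.
Qed.

End Fact.
Section Main.
Variable n : nat.
Local Notation N := n.+1.
Local Open Scope ring_scope.
Import GRing.Theory.

Lemma cyc_le (p : SP N) : (cycDp p <= N)%N.
Proof. by rewrite /cycDp -[X in (_ <= X)%N](card_ord N) max_card. Qed.

Lemma Pm1 (p : SP N) : Pm 1 p = (p == sp_one N).
Proof.
apply/idP/eqP => [Pp|->]; last first.
  rewrite /Pm inD_one; apply/forallP => j; apply/implyP => _.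
  by rewrite /= perm1 ffunE eqxx.
have high (j : 'I_N) : (0 < j)%N -> p.1 j = j /\ p.2 j = false.
  by move=> j0; apply: (Pm_fix Pp).
have s0 : p.1 ord0 = ord0.
  apply/eqP; apply/negPn/negP => ne.
  have jpos : (0 < p.1 ord0)%N by rewrite lt0n; apply: contra ne => /eqP e; apply/eqP/val_inj.
  have [h1 _] := high _ jpos.
  by move/eqP: ne; apply; apply: (perm_inj h1).
have sE : p.1 = 1%g.
  apply/permP => j; rewrite perm1; case: (posnP j) => [j0|jp]; last by case: (high j jp).
  by have -> : j = ord0 by apply/val_inj.
have e0 : p.2 ord0 = false.
  apply/negbTE/negP => e0; case/andP: Pp => ID _; move: ID; rewrite /inD /nbar.
  have -> : [set k | p.2 k] = [set ord0].
    apply/setP => k; rewrite !inE; case: (posnP k) => [k0|kp].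
      by have -> : k = ord0 by apply/val_inj.
    case: (high k kp) => _ ->; apply/esym/eqP => e; move: kp; by rewrite e.
  by rewrite cards1.
case: p sE e0 high {Pp s0} => s e /= -> e0 high; congr pair; apply/ffunP => j.
rewrite ffunE; case: (posnP j) => [j0|jp]; last by case: (high j jp).
by have -> : j = ord0 by apply/val_inj.
Qed.

Lemma PmN (p : SP N) : Pm N p = inD p.
Proof.
rewrite /Pm; case: (inD p) => //=; apply/forallP => j.
by rewrite leqNgt ltn_ord.
Qed.

Lemma reindex_sum (R : nmodType) (F : SP N -> R) (m : 'I_N) : (0 < m)%N ->
  \sum_(p | Pm m.+1 p) F p =
  \sum_(q | Pm m q) \sum_(c < (2 * m).+2) F (sp_mul q (gen m c)).
Proof.
move=> m0.
have hle : ((2 * m).+2 <= (2 * n).+2)%N by rewrite !ltnS leq_mul2l /= -ltnS.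
rewrite [RHS](eq_bigr (fun q => \sum_(c < (2 * n).+2 | (c < (2 * m).+2)%N)
           F (sp_mul q (gen m c)))); last first.
  by move=> q _; apply: (big_ord_widen _ (fun c : nat => F (sp_mul q (gen m c))) hle).
rewrite pair_big_dep /=.
rewrite (reindex_onto (fun j : SP N * 'I_(2 * n).+2 => sp_mul j.1 (gen m j.2))
   (fun p => (sp_mul p (gen m (dec m p)), inord (dec m p)))) /=; last first.
  move=> p Pp; have [dl _] := dec_ok m0 Pp.
  by rewrite inordK ?mul_gen_K //; apply: leq_trans hle; rewrite -addn2.
apply: eq_bigl => -[q c] /=; apply/idP/idP.
  case/andP => P1 /eqP [] e1 e2.
  have [dl Pq'] := dec_ok m0 P1.
  by rewrite -e1 Pq' /= -e2 inordK; move: dl hle; lia.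
case/andP => Pq hc.
have hc' : (c < 2 * m + 2)%N by rewrite addn2.
by rewrite Pm_mul // dec_mul // mul_gen_K inord_val eqxx.
Qed.

Lemma fact_main (R : comNzRingType) (x y : R) (m : nat) : (0 < m <= N)%N ->
  [/\ forall p : SP N, Pm m p -> (N < cycDp p + m)%N,
      forall p : SP N, Pm m p -> exists w : seq (SP N),
         [/\ all (@isgen N) w, prodw w = p & size w = (N - cycDp p)%N]
    & \sum_(p : SP N | Pm m p) x ^+ (cycDp p + m - N.+1) * y ^+ (N - cycDp p)
      = \prod_(1 <= i < m) (x + (2 * i + 1)%:R * y)].
Proof.
elim: m => [|m IH] //; case/andP => _ hmN.
case: (posnP m) => [->|mpos].
  split.
  - by move=> p; rewrite Pm1 => /eqP ->; rewrite cyc_one addn1.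
  - move=> p; rewrite Pm1 => /eqP ->; exists [::]; split => //.
    by rewrite cyc_one subnn.
  - rewrite (big_pred1 (sp_one N)); last by move=> p; rewrite Pm1.
    by rewrite cyc_one addn1 !subnn big_geq // !expr0 mulr1.
have [B W S] := IH ltac:(rewrite mpos /=; exact: ltnW).
pose mo : 'I_N := Ordinal hmN.
have mo0 : (0 < mo)%N by [].
have dec_facts p : Pm m.+1 p ->
   let c := dec mo p in let q := sp_mul p (gen mo c) in
   [/\ (c < 2 * mo + 2)%N, Pm m q, p = sp_mul q (gen mo c) &
       cycDp p + (c != 0%N) = cycDp q]%N.
  move=> Pp c q; have [dl Pq] := dec_ok mo0 Pp.
  have pq : p = sp_mul q (gen mo c) by rewrite mul_gen_K.
  split => //; rewrite {1}pq; exact: cyc_fact.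
split.
- move=> p /dec_facts [dl Pq pq cq]; have := B _ Pq; have := leq_b1 (dec mo p != 0%N).
  by rewrite -cq; lia.
- move=> p /dec_facts [dl Pq pq cq]; have [w [aw pw sw]] := W _ Pq.
  have cqN := cyc_le (sp_mul p (gen mo (dec mo p))).
  case: eqP cq => [c0|/eqP c0] cq.
    exists w; split => //; first by rewrite pw c0 /gen /= sp_mul1.
    by rewrite sw -cq addn0.
  exists (rcons w (gen mo (dec mo p))); split.
  + by rewrite all_rcons aw gen_isgen.
  + by rewrite prodw_rcons pw -pq.
  + by rewrite size_rcons sw -cq; lia.
rewrite (@reindex_sum R (fun p : SP N => x ^+ (cycDp p + m.+1 - N.+1) * y ^+ (N - cycDp p)) mo mo0).
rewrite (eq_bigr (fun q => (x ^+ (cycDp q + m - N.+1) * y ^+ (N - cycDp q)) *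
                          (x + (2 * m + 1)%:R * y))); last first.
  move=> q Pq; rewrite big_ord_recl /=.
  have cq := B _ Pq; have cN := cyc_le q.
  have -> : gen mo 0 = sp_one N by [].
  rewrite sp_mul1.
  rewrite (eq_bigr (fun _ => y * (x ^+ (cycDp q + m - N.+1) * y ^+ (N - cycDp q)))); last first.
    move=> i _; have := @cyc_fact n q mo (bump 0 i) mo0 ltac:(rewrite /bump /=; move: (ltn_ord i); lia) Pq.
    rewrite /bump /= => cf.
    have -> : (cycDp (sp_mul q (gen mo (1 + i))) + m.+1 - N.+1 = cycDp q + m - N.+1)%N by lia.
    have -> : (N - cycDp (sp_mul q (gen mo (1 + i))) = (N - cycDp q).+1)%N by lia.
    by rewrite exprS mulrCA.
  rewrite sumr_const card_ord.
  have -> : (cycDp q + m.+1 - N.+1 = (cycDp q + m - N.+1).+1)%N by lia.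
  rewrite exprS -mulr_natl; ring.
by rewrite -big_distrl /= S big_nat_recr.
Qed.

End Main.
Section Ell.
Variable n : nat.
Local Notation N := n.+1.

Lemma ellD_eq (p : SP N) : inD p -> ellD p = (N - cycDp p)%N.
Proof.
move=> ID; have Pp : Pm N p by rewrite PmN.
have [B W _] := @fact_main n int 0 0 N ltac:(by rewrite /= leqnn).
have cB := B p Pp.
have [w [aw pw sw]] := W p Pp.
rewrite /ellD; set P := (fun k => _).
set K := #|{: SP N}|.
have Pk : P (N - cycDp p)%N.
  have szw : size w == (N - cycDp p)%N by apply/eqP.
  by apply/existsP; exists (Tuple szw); rewrite /= aw pw eqxx.
have k0K : (N - cycDp p < K)%N.
  rewrite /K card_prod card_ffun card_bool card_ord.
  have pos : (0 < #|{perm 'I_N}|)%N by apply/card_gt0P; exists 1%g.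
  apply: (@leq_trans N); first by lia.
  apply: leq_trans (ltnW (ltn_expl N (ltnSn 1))) _.
  by rewrite leq_pmull.
have hs : has P (iota 0 K) by apply/hasP; exists (N - cycDp p)%N; rewrite ?mem_iota.
have jK : (find P (iota 0 K) < K)%N by rewrite -[X in (_ < X)%N](size_iota 0 K) -has_find.
have Pj : P (find P (iota 0 K)) by have := nth_find 0 hs; rewrite nth_iota // add0n.
have jle : (find P (iota 0 K) <= N - cycDp p)%N.
  rewrite leqNgt; apply/negP => lt; have := before_find 0 lt.
  by rewrite nth_iota // add0n Pk.
have jge : (N - cycDp p <= find P (iota 0 K))%N.
  case/existsP: Pj => t /andP [aw2 /eqP pt]; have := cyc_word aw2.
  by rewrite pt size_tuple; lia.
by apply/eqP; rewrite eqn_leq jle jge.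
Qed.

End Ell.

Local Open Scope ring_scope.
Import GRing.Theory.
Unset Implicit Arguments.

Theorem corollary6p9 (n : nat) : (1 <= n)%N ->
  (\sum_(p : SP n | inD p) 'X^(cycDp p)
     = 'X * \prod_(2 <= i < n.+1) ('X + ((2 * i - 1)%N%:R)%:P) :> {poly int})
  /\
  (\sum_(p : SP n | inD p) 'X^(ellD p)
     = \prod_(2 <= i < n.+1) (1 + (2 * i - 1)%N%:R *: 'X) :> {poly int}).
Proof.
case: n => [//|n] _.
have [B _ S1] := @fact_main n {poly int} 'X 1 n.+1 ltac:(by rewrite /= leqnn).
have [_ _ S2] := @fact_main n {poly int} 1 'X n.+1 ltac:(by rewrite /= leqnn).
split.
  rewrite (eq_bigl (fun p => Pm n.+1 p)); last by move=> p; rewrite PmN.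
  rewrite (eq_bigr (fun p => 'X * ('X ^+ (cycDp p + n.+1 - n.+2) * 1 ^+ (n.+1 - cycDp p)))); last first.
    by move=> p Pp; have := B p Pp; rewrite expr1n mulr1 -exprS => ?; congr ('X ^+ _); lia.
  rewrite -big_distrr /= S1 [in RHS]big_add1 /=.
  congr (_ * _); apply: eq_bigr => i _.
  by rewrite mulr1 polyC_natr; congr (_ + _%:R); lia.
rewrite (eq_bigl (fun p => Pm n.+1 p)); last by move=> p; rewrite PmN.
rewrite (eq_bigr (fun p => 1 ^+ (cycDp p + n.+1 - n.+2) * 'X ^+ (n.+1 - cycDp p))); last first.
  by move=> p Pp; rewrite expr1n mul1r ellD_eq // -PmN.
rewrite S2 [in RHS]big_add1 /=; apply: eq_bigr => i _.
by rewrite -mul_polyC polyC_natr; congr (_ + _%:R * _); lia.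
Qed.
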